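(* Let $H:[0,1)\to(0,\infty)$ be any function and for $D=(\mu,\mathcal{A},\mathcal{B},\mathcal{F})\in\mathcal{BV}(\Omega)$ set $\Theta^{(H)}_D:=|\mathcal{B}|^2H(|\mu|^2)\,dx\,dy$. Then the following are equivalent: (a) $\Theta^{(H)}$ is gauge-invariant and diffeomorphism-covariant, i.e. $\Theta^{(H)}_{\phi\cdot D}=\Theta^{(H)}_D$ for every domain $\Omega$, every $D\in\mathcal{BV}(\Omega)$ and every gauge $\phi$ on $\Omega$, and $\Theta^{(H)}_{\Phi^*D}=\Phi^*\Theta^{(H)}_D$ for every diffeomorphism $\Phi:\Omega_1\to\Omega_2$ between domains and every $D\in\mathcal{BV}(\Omega_2)$; (b) there is a constant $C>0$ with $H(s)=\frac{C}{1-s}$ for all $s\in[0,1)$.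
   Context: A domain is an open connected subset of $\mathbb{C}$, $z=x+iy$. $\mathcal{BV}(\Omega)$ is the set of quadruples $(\mu,\mathcal{A},\mathcal{B},\mathcal{F})$ of continuous complex functions on $\Omega$ with $|\mu|<1$ pointwise. Gauge action: for a $C^1$ nowhere-vanishing $\phi$ on $\Omega$, $\phi\cdot(\mu,\mathcal{A},\mathcal{B},\mathcal{F})=(\mu,\ \mathcal{A}-\phi_{\bar z}/\phi+\mu\phi_z/\phi,\ \mathcal{B}\phi/\bar\phi,\ \phi\mathcal{F})$. Diffeomorphism: $C^1$ bijection $\Phi:\Omega_1\to\Omega_2$ with $C^1$ inverse and $J=|\Phi_z|^2-|\Phi_{\bar z}|^2>0$; for $D\in\mathcal{BV}(\Omega_2)$, with $K=\Phi_z+(\mu\circ\Phi)\overline{\Phi_{\bar z}}$, $\Phi^*D=((\Phi_{\bar z}+(\mu\circ\Phi)\overline{\Phi_z})/K,\ J(\mathcal{A}\circ\Phi)/K,\ J(\mathcal{B}\circ\Phi)/K,\ J(\mathcal{F}\circ\Phi)/K)$. The pullback of a 2-form is $\Phi^*(f\,dx\,dy)=(f\circ\Phi)J\,dx\,dy$. *)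

(* Defs.v *)
(* The complex plane is Coquelicot's C = R * R,
   z = x + i y  <->  (x, y). *)
From Stdlib Require Import Reals.
From Coquelicot Require Import Coquelicot.
Open Scope R_scope.

Definition connected_set (S : C -> Prop) : Prop :=
  forall U V : C -> Prop, open U -> open V ->
    (forall p, S p -> U p \/ V p) ->
    (forall p, S p -> U p -> V p -> False) ->
    (forall p, S p -> U p) \/ (forall p, S p -> V p).

Definition domain (O : C -> Prop) : Prop := open O /\ connected_set O.

Definition C1_with (O : C -> Prop) (f fx fy : C -> C) : Prop :=
  forall p : C, O p ->
    is_derive (fun t : R => f (t, snd p)) (fst p) (fx p) /\
    is_derive (fun t : R => f (fst p, t)) (snd p) (fy p) /\
    continuous fx p /\ continuous fy p.

Definition C1_on (O : C -> Prop) (f : C -> C) : Prop :=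
  exists fx fy, C1_with O f fx fy.

Definition dz (fx fy : C -> C) (p : C) : C := ((fx p - Ci * fy p) / RtoC 2)%C.
Definition dzb (fx fy : C -> C) (p : C) : C := ((fx p + Ci * fy p) / RtoC 2)%C.

Record quad := Quad { qmu : C -> C; qA : C -> C; qB : C -> C; qF : C -> C }.

Definition continuous_on (O : C -> Prop) (f : C -> C) : Prop :=
  forall p, O p -> continuous f p.

Definition BV (O : C -> Prop) (D : quad) : Prop :=
  continuous_on O (qmu D) /\ continuous_on O (qA D) /\
  continuous_on O (qB D) /\ continuous_on O (qF D) /\
  forall p, O p -> Cmod (qmu D p) < 1.

Definition gauge_with (O : C -> Prop) (phi phix phiy : C -> C) : Prop :=
  C1_with O phi phix phiy /\ forall p, O p -> phi p <> RtoC 0.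

Definition gauge_act (phi phix phiy : C -> C) (D : quad) : quad :=
  Quad (qmu D)
       (fun p => (qA D p - dzb phix phiy p / phi p
                  + qmu D p * dz phix phiy p / phi p)%C)
       (fun p => (qB D p * phi p / Cconj (phi p))%C)
       (fun p => (phi p * qF D p)%C).

Definition jac (Px Py : C -> C) (p : C) : R :=
  Cmod (dz Px Py p) ^ 2 - Cmod (dzb Px Py p) ^ 2.

Definition diffeo_with (O1 O2 : C -> Prop) (Phi Px Py : C -> C) : Prop :=
  C1_with O1 Phi Px Py /\
  (forall p, O1 p -> O2 (Phi p)) /\
  (exists Psi : C -> C,
      C1_on O2 Psi /\
      (forall q, O2 q -> O1 (Psi q)) /\
      (forall p, O1 p -> Psi (Phi p) = p) /\
      (forall q, O2 q -> Phi (Psi q) = q)) /\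
  (forall p, O1 p -> 0 < jac Px Py p).

Definition pullback (Phi Px Py : C -> C) (D : quad) : quad :=
  let K := fun p => (dz Px Py p + qmu D (Phi p) * Cconj (dzb Px Py p))%C in
  let J := fun p => RtoC (jac Px Py p) in
  Quad (fun p => ((dzb Px Py p + qmu D (Phi p) * Cconj (dz Px Py p)) / K p)%C)
       (fun p => (J p * qA D (Phi p) / K p)%C)
       (fun p => (J p * qB D (Phi p) / K p)%C)
       (fun p => (J p * qF D (Phi p) / K p)%C).

(* Theta^(H)_D = |B|^2 H(|mu|^2) dx dy, represented by its density *)
Definition Theta (H : R -> R) (D : quad) (p : C) : R :=
  Cmod (qB D p) ^ 2 * H (Cmod (qmu D p) ^ 2).

(* pullback of a 2-form f dx dy: (f o Phi) J dx dy *)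
Definition pullback_form (Phi Px Py : C -> C) (f : C -> R) (p : C) : R :=
  f (Phi p) * jac Px Py p.

(* Theta^(H) is gauge invariant and diffeomorphism covariant;
   2-forms on a domain are compared pointwise on that domain *)
Definition natural_Theta (H : R -> R) : Prop :=
  (forall (O : C -> Prop) (D : quad) (phi phix phiy : C -> C),
      domain O -> BV O D -> gauge_with O phi phix phiy ->
      forall p, O p -> Theta H (gauge_act phi phix phiy D) p = Theta H D p) /\
  (forall (O1 O2 : C -> Prop) (Phi Px Py : C -> C) (D : quad),
      domain O1 -> domain O2 -> diffeo_with O1 O2 Phi Px Py -> BV O2 D ->
      forall p, O1 p ->
        Theta H (pullback Phi Px Py D) p = pullback_form Phi Px Py (Theta H D) p).

(* Main.v *)
Require Import Defs.
From Stdlib Require Import Reals Lra Classical.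
From Coquelicot Require Import Coquelicot.
Open Scope R_scope.

Lemma ball_C (x y : C) (e : R) :
  Rabs (fst y - fst x) < e -> Rabs (snd y - snd x) < e -> ball x e y.
Proof. intros H1 H2. split; assumption. Qed.

Section Seg.
Variables p1 p2 q1 q2 : R.
Definition gseg (t : R) : C := (p1 + t * (q1 - p1), p2 + t * (q2 - p2)).

Lemma seg_nbhd (W : C -> Prop) t : open W -> W (gseg t) ->
  exists d, 0 < d /\ forall u, Rabs (u - t) < d -> W (gseg u).
Proof.
intros oW Wt. destruct (oW _ Wt) as [eps Heps].
set (M := 1 + Rabs (q1 - p1) + Rabs (q2 - p2)).
assert (HM : 0 < M) by (unfold M; pose proof (Rabs_pos (q1-p1)); pose proof (Rabs_pos (q2-p2)); lra).
exists (eps / M). split. { apply Rdiv_lt_0_compat; [apply cond_pos|lra]. }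
intros u Hu. apply Heps. apply ball_C; simpl.
- replace (p1 + u * (q1 - p1) - (p1 + t * (q1 - p1))) with ((u - t) * (q1 - p1)) by ring.
  rewrite Rabs_mult.
  assert (Rabs (q1 - p1) < M) by (unfold M; pose proof (Rabs_pos (q2-p2)); lra).
  assert (Rabs (u-t) * M < eps). { apply (Rmult_lt_compat_r M) in Hu; [|lra].
    unfold Rdiv in Hu. rewrite Rmult_assoc, Rinv_l in Hu; lra. }
  pose proof (Rabs_pos (u-t)). pose proof (Rabs_pos (q1-p1)). nra.
- replace (p2 + u * (q2 - p2) - (p2 + t * (q2 - p2))) with ((u - t) * (q2 - p2)) by ring.
  rewrite Rabs_mult.
  assert (Rabs (q2 - p2) < M) by (unfold M; pose proof (Rabs_pos (q1-p1)); lra).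
  assert (Rabs (u-t) * M < eps). { apply (Rmult_lt_compat_r M) in Hu; [|lra].
    unfold Rdiv in Hu. rewrite Rmult_assoc, Rinv_l in Hu; lra. }
  pose proof (Rabs_pos (u-t)). pose proof (Rabs_pos (q2-p2)). nra.
Qed.
End Seg.

Lemma plane_sep (U V : C -> Prop) (p q : C) : open U -> open V ->
  (forall z, U z \/ V z) -> (forall z, U z -> V z -> False) -> U p -> V q -> False.
Proof.
intros oU oV cov disj Up Vq.
destruct p as [p1 p2], q as [q1 q2].
set (g := gseg p1 p2 q1 q2).
assert (g0 : g 0 = (p1, p2)) by (unfold g, gseg; f_equal; ring).
assert (g1 : g 1 = (q1, q2)) by (unfold g, gseg; f_equal; ring).
set (E := fun t => 0 <= t <= 1 /\ forall u, 0 <= u <= t -> U (g u)).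
assert (bE : bound E) by (exists 1; intros t [Ht _]; lra).
assert (nE : exists x, E x).
{ exists 0. split; [lra|]. intros u Hu. replace u with 0 by lra. rewrite g0; auto. }
destruct (completeness E bE nE) as [s [ubs lubs]].
assert (s0 : 0 <= s) by (apply ubs; destruct nE; unfold E; split; [lra|]; intros u Hu; replace u with 0 by lra; rewrite g0; auto).
assert (s1 : s <= 1) by (apply lubs; intros t [Ht _]; lra).
assert (key : forall u, 0 <= u < s -> U (g u)).
{ intros u Hu. destruct (classic (exists t, E t /\ u < t)) as [[t [[_ Et] ut]]|NE].
  - apply Et; lra.
  - exfalso. assert (s <= u). { apply lubs. intros t Et. destruct (Rle_lt_dec t u); auto.
      exfalso; apply NE; eauto. } lra. }
destruct (cov (g s)) as [Us|Vs].
- destruct (Req_dec s 1) as [e1|ne1].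
  { subst s. rewrite g1 in Us. eauto. }
  destruct (seg_nbhd p1 p2 q1 q2 U s oU Us) as [d [d0 Hd]].
  set (t := Rmin 1 (s + d/2)).
  assert (Et : E t).
  { split. { unfold t. split; [apply Rmin_glb; lra| apply Rmin_l]. }
    intros u Hu. destruct (Rlt_le_dec u s) as [us|us].
    - apply key; lra.
    - apply Hd. assert (t <= s + d/2) by apply Rmin_r. rewrite Rabs_right; lra. }
  apply ubs in Et. unfold t, Rmin in Et. destruct (Rle_dec 1 (s + d/2)); lra.
- destruct (Req_dec s 0) as [e0|ne0].
  { subst s. rewrite g0 in Vs. eauto. }
  destruct (seg_nbhd p1 p2 q1 q2 V s oV Vs) as [d [d0 Hd]].
  set (u := Rmax 0 (s - d/2)).
  assert (u < s) by (unfold u; apply Rmax_lub_lt; lra).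
  assert (0 <= u) by apply Rmax_l.
  assert (s - d/2 <= u) by apply Rmax_r.
  apply (disj (g u)).
  + apply key; lra.
  + apply Hd. rewrite Rabs_left; lra.
Qed.

Lemma plane_connected : connected_set (fun _ => True).
Proof.
intros U V oU oV cov disj.
destruct (classic (forall p, True -> U p)) as [H|H]; [left; auto|right].
apply not_all_ex_not in H. destruct H as [q Hq].
assert (Vq : V q) by (destruct (cov q I); tauto).
intros p _. destruct (cov p I) as [Up|Vp]; auto.
exfalso. exact (plane_sep U V p q oU oV (fun z => cov z I) (fun z => disj z I) Up Vq).
Qed.

Lemma plane_domain : Defs.domain (fun _ => True).
Proof. split; [intros x _; exists (mkposreal 1 Rlt_0_1); auto | apply plane_connected]. Qed.

Lemma lin_deriv (f : R -> C) (v w : C) (x : R) :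
  (forall t, f t = (fst v * t + fst w, snd v * t + snd w)) -> is_derive f x v.
Proof.
intros Hf.
apply is_derive_ext with (fun t : R => plus (scal t v) w).
{ intros t. rewrite Hf. destruct v, w. unfold plus, scal; simpl.
  apply injective_projections; simpl; unfold plus, scal; simpl; rewrite Rmult_comm; reflexivity. }
assert (D : is_derive (fun t : R => plus (scal t v) w) x (plus (scal (@one R_AbsRing) v) (@zero C_R_NormedModule))).
{ apply (@is_derive_plus R_AbsRing C_R_NormedModule (fun t : R => scal t v) (fun _ => w)).
  apply (@is_derive_scal_l R_AbsRing C_R_NormedModule (fun t => t)). apply is_derive_id. apply is_derive_const. }
assert (E : plus (scal (@one R_AbsRing) v) (@zero C_R_NormedModule) = v).
{ destruct v. unfold plus, scal, one, zero; simpl.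
  apply injective_projections; simpl; unfold plus, scal, one, zero; simpl; unfold mult; simpl; ring. }
rewrite E in D; exact D.
Qed.

Lemma Cmod2 (z : C) : Cmod z ^ 2 = fst z ^ 2 + snd z ^ 2.
Proof. unfold Cmod. rewrite pow2_sqrt; [reflexivity|]. nra. Qed.

Lemma key_id (a b m : C) :
  Cmod (a + m * Cconj b)%C ^ 2 - Cmod (b + m * Cconj a)%C ^ 2 =
  (Cmod a ^ 2 - Cmod b ^ 2) * (1 - Cmod m ^ 2).
Proof. rewrite !Cmod2. destruct a, b, m; simpl. ring. Qed.

Lemma gauge_inv (H : R -> R) phi phix phiy D p : phi p <> RtoC 0 ->
  Theta H (gauge_act phi phix phiy D) p = Theta H D p.
Proof.
intros Hn. unfold Theta, gauge_act; simpl.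
assert (Cconj (phi p) <> RtoC 0).
{ intro E. apply Hn. apply Cmod_eq_0. rewrite <- Cmod_conj, E. apply Cmod_0. }
rewrite Cmod_div by auto. rewrite Cmod_mult, Cmod_conj.
assert (0 < Cmod (phi p)) by (apply Cmod_gt_0; auto).
f_equal. field. lra.
Qed.

Lemma diffeo_cov (c : R) (H : R -> R) (Hc : forall s, 0 <= s < 1 -> H s = c / (1 - s))
  (a b m B : C) (J : R) :
  J = Cmod a ^ 2 - Cmod b ^ 2 -> 0 < J -> Cmod m < 1 ->
  Cmod (RtoC J * B / (a + m * Cconj b))%C ^ 2 *
    H (Cmod ((b + m * Cconj a) / (a + m * Cconj b))%C ^ 2) =
  Cmod B ^ 2 * H (Cmod m ^ 2) * J.
Proof.
intros HJ J0 m1.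
pose proof (key_id a b m) as K. rewrite <- HJ in K.
set (k := Cmod (a + m * Cconj b)%C) in *.
set (n := Cmod (b + m * Cconj a)%C) in *.
set (r := Cmod m) in *.
assert (r0 : 0 <= r) by apply Cmod_ge_0.
assert (n0 : 0 <= n) by apply Cmod_ge_0.
assert (k0 : 0 <= k) by apply Cmod_ge_0.
assert (r2 : r ^ 2 < 1) by nra.
assert (kn : n ^ 2 < k ^ 2) by nra.
assert (kpos : 0 < k) by nra.
assert (Kn : (a + m * Cconj b)%C <> RtoC 0) by (apply Cmod_gt_0; exact kpos).
rewrite !Cmod_div by exact Kn. rewrite Cmod_mult, Cmod_R, Rabs_right by lra.
fold k n.
assert (q0 : 0 <= (n / k) ^ 2) by apply pow2_ge_0.
assert (q1 : (n / k) ^ 2 < 1).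
{ replace ((n/k)^2) with (n^2 / k^2) by (field; lra).
  apply (Rmult_lt_reg_r (k^2)); [nra|]. unfold Rdiv. rewrite Rmult_assoc, Rinv_l by nra. lra. }
rewrite (Hc ((n/k)^2)) by lra.
rewrite (Hc (r^2)) by (split; [apply pow2_ge_0|lra]).
replace (1 - (n / k) ^ 2) with (J * (1 - r ^ 2) / k ^ 2) by (rewrite <- K; field; lra).
field. repeat split; nra.
Qed.

Theorem proposition8p3 (H : R -> R)
  (Hpos : forall s, 0 <= s < 1 -> 0 < H s) :
  natural_Theta H <->
  exists c : R, 0 < c /\ forall s, 0 <= s < 1 -> H s = c / (1 - s).
Proof.
split.
- intros [_ Hd]. exists (H 0). split; [apply Hpos; lra|].
  intros s Hs.
  set (be := sqrt s).
  assert (be0 : 0 <= be) by apply sqrt_pos.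
  assert (be2 : be ^ 2 = s) by (unfold be; rewrite pow2_sqrt; lra).
  assert (be1 : be < 1) by (destruct (Rlt_le_dec be 1) as [h|h]; auto; exfalso; assert (1 * 1 <= be * be) by (apply Rmult_le_compat; lra); simpl in be2; lra).
  set (Phi := fun z : C => ((1 + be) * fst z, (1 - be) * snd z) : C).
  set (Px := fun _ : C => ((1 + be), 0) : C).
  set (Py := fun _ : C => (0, (1 - be)) : C).
  set (D := Quad (fun _ => RtoC 0) (fun _ => RtoC 0) (fun _ => RtoC 1) (fun _ => RtoC 0)).
  assert (dz1 : forall p, dz Px Py p = RtoC 1).
  { intros p. unfold dz, Px, Py. apply injective_projections; simpl; field. }
  assert (dzb1 : forall p, dzb Px Py p = RtoC be).
  { intros p. unfold dzb, Px, Py. apply injective_projections; simpl; field. }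
  assert (jac1 : forall p, jac Px Py p = 1 - be ^ 2).
  { intros p. unfold jac. rewrite dz1, dzb1, !Cmod2. simpl. ring. }
  assert (Hdiff : diffeo_with (fun _ => True) (fun _ => True) Phi Px Py).
  { split; [|split; [|split]].
    - intros p _. split; [|split; [|split]].
      + apply (lin_deriv _ _ ((0, (1 - be) * snd p) : C)). intros t. unfold Phi, Px. simpl. f_equal; ring.
      + apply (lin_deriv _ _ (((1 + be) * fst p, 0) : C)). intros t. unfold Phi, Py. simpl. f_equal; ring.
      + apply continuous_const.
      + apply continuous_const.
    - auto.
    - exists (fun z : C => (fst z / (1 + be), snd z / (1 - be)) : C).
      split; [|split; [|split]].
      + exists (fun _ => (/ (1 + be), 0) : C), (fun _ => (0, / (1 - be)) : C).
        intros p _. split; [|split; [|split]].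
        * apply (lin_deriv _ _ ((0, snd p / (1 - be)) : C)). intros t. simpl. f_equal; field; lra.
        * apply (lin_deriv _ _ ((fst p / (1 + be), 0) : C)). intros t. simpl. f_equal; field; lra.
        * apply continuous_const.
        * apply continuous_const.
      + auto.
      + intros [x y] _. unfold Phi. simpl. f_equal; field; lra.
      + intros [x y] _. unfold Phi. simpl. f_equal; field; lra.
    - intros p _. rewrite jac1. nra. }
  assert (HBV : BV (fun _ => True) D).
  { split; [|split; [|split; [|split]]]; try (intros p _; apply continuous_const).
    intros p _. simpl. rewrite Cmod_0. lra. }
  pose proof (Hd _ _ Phi Px Py D plane_domain plane_domain Hdiff HBV (RtoC 0) I) as E.
  unfold Theta, pullback, pullback_form in E. simpl in E.
  rewrite dz1, dzb1, jac1 in E.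
  assert (e1 : ((RtoC (1 - be ^ 2) * RtoC 1) / (RtoC 1 + RtoC 0 * Cconj (RtoC be)))%C = RtoC (1 - be^2)).
  { apply injective_projections; simpl; field. }
  assert (e2 : ((RtoC be + RtoC 0 * Cconj (RtoC 1)) / (RtoC 1 + RtoC 0 * Cconj (RtoC be)))%C = RtoC be).
  { apply injective_projections; simpl; field. }
  rewrite e1, e2 in E. rewrite Cmod_1, Cmod_0, !Cmod_R in E.
  rewrite (Rabs_right be), (Rabs_right (1 - be ^ 2)) in E by nra.
  replace (be * (be * 1)) with s in E by (rewrite <- be2; ring).
  replace (0 * (0 * 1)) with 0 in E by ring.
  rewrite be2 in E.
  assert (0 < 1 - s) by lra.
  apply (Rmult_eq_reg_r ((1 - s) * (1 - s))); [| nra].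
  replace (H 0 / (1 - s) * ((1 - s) * (1 - s))) with (H 0 * (1 - s)) by (field; lra).
  replace (H 0 * (1 - s)) with (1 * (1 * 1) * H 0 * (1 - s)) by ring. rewrite <- E. ring.
- intros [c [c0 Hc]]. split.
  + intros O D phi phix phiy _ _ [_ Hn] p Hp. apply gauge_inv. auto.
  + intros O1 O2 Phi Px Py D _ _ [_ [Hmap [_ HJ]]] [_ [_ [_ [_ Hm]]]] p Hp.
    unfold Theta, pullback, pullback_form. simpl.
    apply (diffeo_cov c H Hc); auto. 
Qed.
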